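(* Let $\varphi$ be an $N$-function with right derivative $p=\varphi'_+$. Then for every $f\in\mathcal M_{\varphi,w}$ with $f\neq0$, $$\bar k^{**}(f)=\sup\Big\{k>0:\rho_{\varphi_*,w}\Big(p\Big(\tfrac{k(f^* )^0}{w}\Big)\Big)\le1\Big\}<\infty .$$
   Context: Let $I=[0,\gamma)$, $0<\gamma\le\infty$, Lebesgue measure $m$, $L_0$ the measurable functions on $I$, $f^*$ the decreasing rearrangement of $f$. Orlicz function: convex $\varphi:[0,\infty)\to[0,\infty)$, $\varphi(0)=0$, $\varphi(u)>0$ for $u>0$; $N$-function: additionally $\lim_{u\to0}\varphi(u)/u=0$ and $\lim_{u\to\infty}\varphi(u)/u=\infty$. Complementary function $\varphi_*(v)=\sup_{u>0}(uv-\varphi(u))$. Weight: positive decreasing locally integrable $w$ on $I$, $W(t)=\int_0^tw$, $W(\infty)=\infty$ if $\gamma=\infty$. Orlicz–Lorentz modular $\rho_{\psi,w}(g)=\int_I\psi(g^* )w$. Halperin level function $g^0$ of $g\ge0$ w.r.t. $w$: with $G(a,b)=\int_a^bg$, $W(a,b)=\int_a^bw$, $(a,b]$ is a level interval if $G(a,t)/W(a,t)\le G(a,b)/W(a,b)$ for all $t\in(a,b]$, maximal if not contained in another; $g^0=\frac{G(a,b)}{W(a,b)}w$ on each maximal level interval and $g^0=g$ elsewhere. $Q_{\varphi,w}(f)=\int_I\varphi((f^* )^0/w)w$ and $\mathcal M_{\varphi,w}=\{f:Q_{\varphi,w}(kf)<\infty\text{ for some }k>0\}$. *)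

(* Defs.v *)
From HB Require Import structures.
From mathcomp Require Import all_boot all_order all_algebra.
From mathcomp Require Import all_classical all_reals all_analysis.
Set Implicit Arguments. Unset Strict Implicit. Unset Printing Implicit Defensive.
Import Order.TTheory GRing.Theory Num.Theory numFieldNormedType.Exports.
Local Open Scope classical_set_scope.
Local Open Scope ring_scope.

Section Defs.
Variable R : realType.
Local Notation mu := (@lebesgue_measure R).

Definition Iset (gam : \bar R) : set R := [set x | 0 <= x /\ (x%:E < gam)%E].

(* Orlicz function (only values on [0,oo) matter) *)
Definition is_Orlicz (phi : R -> R) : Prop :=
  [/\ forall x y t, 0 <= x -> 0 <= y -> 0 <= t <= 1 ->
        phi (t * x + (1 - t) * y) <= t * phi x + (1 - t) * phi y,
      phi 0 = 0 &
      forall u, 0 < u -> 0 < phi u].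

Definition is_Nfunction (phi : R -> R) : Prop :=
  [/\ is_Orlicz phi,
      (phi u / u @[u --> 0^'+] --> 0) &
      (phi u / u @[u --> +oo] --> +oo)].

Definition phistar (phi : R -> R) (v : R) : R :=
  sup [set u * v - phi u | u in [set u : R | 0 < u]].

Definition rderiv (phi : R -> R) (u : R) : R :=
  lim ((phi (u + h) - phi u) / h @[h --> 0^'+]).

Definition extE (F : R -> R) (x : \bar R) : \bar R :=
  if x is r%:E then (F r)%:E else +oo%E.

Definition is_weight (gam : \bar R) (w : R -> R) : Prop :=
  [/\ forall x, Iset gam x -> 0 < w x,
      forall x y, Iset gam x -> Iset gam y -> x <= y -> w y <= w x,
      forall t, Iset gam t -> mu.-integrable `[0, t] (EFin \o w) &
      gam = +oo%E -> (\int[mu]_(x in Iset gam) (w x)%:E = +oo)%E].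

Definition distrib (gam : \bar R) (h : R -> \bar R) (s : R) : \bar R :=
  mu [set x | Iset gam x /\ (s%:E < `|h x|)%E].

Definition drearr (gam : \bar R) (h : R -> \bar R) (t : R) : \bar R :=
  ereal_inf [set s%:E | s in [set s : R | 0 <= s /\ (distrib gam h s <= t%:E)%E]].

Definition Gint (g : R -> \bar R) (a b : R) : \bar R :=
  (\int[mu]_(x in `]a, b]) g x)%E.

Definition Wint (w : R -> R) (a b : R) : R :=
  fine (\int[mu]_(x in `]a, b]) (w x)%:E)%E.

Definition ratio (w : R -> R) (g : R -> \bar R) (a b : R) : \bar R :=
  (Gint g a b * ((Wint w a b)^-1)%:E)%E.

(* (a,b] is a level interval; (a,b] is a subinterval of I up to the endpoint
   b = gam when gam is finite *)
Definition level_int (gam : \bar R) (w : R -> R) (g : R -> \bar R) (a b : R) : Prop :=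
  [/\ 0 <= a, a < b, (b%:E <= gam)%E &
      forall t, a < t <= b -> (ratio w g a t <= ratio w g a b)%E].

Definition maximal_level_int gam w g (a b : R) : Prop :=
  level_int gam w g a b /\
  forall a' b', level_int gam w g a' b' -> `]a, b] `<=` `]a', b'] ->
    a' = a /\ b' = b.

Definition level_fun (gam : \bar R) (w : R -> R) (g : R -> \bar R) (x : R) : \bar R :=
  match pselect (exists ab : R * R,
           maximal_level_int gam w g ab.1 ab.2 /\ ab.1 < x <= ab.2) with
  | left H => let ab := projT1 (cid H) in (ratio w g ab.1 ab.2 * (w x)%:E)%E
  | right _ => g x
  end.

Definition Qfun (phi : R -> R) (gam : \bar R) (w : R -> R) (f : R -> R) : \bar R :=
  (\int[mu]_(x in Iset gam)
     (extE phi (level_fun gam w (drearr gam (EFin \o f)) x * ((w x)^-1)%:E)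
      * (w x)%:E))%E.

Definition inM (phi : R -> R) (gam : \bar R) (w : R -> R) (f : R -> R) : Prop :=
  exists k : R, 0 < k /\ (Qfun phi gam w (fun x => (k * f x)%R) < +oo)%E.

Definition rhoOL (psi : R -> R) (gam : \bar R) (w : R -> R) (h : R -> \bar R) : \bar R :=
  (\int[mu]_(x in Iset gam) (extE psi (drearr gam h x) * (w x)%:E))%E.

Definition kbarss (phi : R -> R) (gam : \bar R) (w : R -> R) (f : R -> R) : \bar R :=
  ereal_sup [set k%:E | k in [set k : R | 0 < k /\
    (rhoOL (phistar phi) gam w
       (fun x => extE (rderiv phi)
          (k%:E * level_fun gam w (drearr gam (EFin \o f)) x * ((w x)^-1)%:E)%E)
     <= 1)%E]].

End Defs.

(* Main.v *)
Require Import Defs.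
From HB Require Import structures.
From mathcomp Require Import all_boot all_order all_algebra.
From mathcomp Require Import all_classical all_reals all_analysis.
From mathcomp Require Import ring lra measurable_realfun.
Import Order.TTheory GRing.Theory Num.Theory numFieldNormedType.Exports.
Local Open Scope classical_set_scope.
Local Open Scope ring_scope.


Section Phi.
Variable R : realType.
Variable phi : R -> R.
Hypothesis Hphi : is_Nfunction phi.

Lemma phi_ge0 u : 0 <= u -> 0 <= phi u.
Proof.
case: Hphi => [[_ p0 pp] _ _]; rewrite le_eqVlt => /predU1P[<-|/pp/ltW//].
by rewrite p0.
Qed.

Lemma phi_ratio s r : 0 < s -> s <= r -> phi s / s <= phi r / r.
Proof.
case: Hphi => [[cvx p0 pp] _ _] s0 sr.
have r0 : 0 < r by exact: lt_le_trans sr.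
have t01 : 0 <= s / r <= 1.
  by apply/andP; split; [rewrite divr_ge0 ?ltW | rewrite ler_pdivrMr// mul1r].
have := cvx r 0 (s / r) (ltW r0) (le_refl 0) t01.
rewrite mulr0 addr0 p0 mulr0 addr0 divfK ?gt_eqF// => h.
rewrite ler_pdivrMr//; apply: (le_trans h); rewrite le_eqVlt; apply/orP; left.
apply/eqP; ring.
Qed.

Lemma rderiv_ge u : 0 < u -> phi u / u <= rderiv phi u.
Proof.
move=> u0; case: Hphi => [[cvx p0 pp] _ _].
pose Q h := (phi (u + h) - phi u) / h.
have Qlb h : 0 < h -> phi u / u <= Q h.
  move=> h0; have uh : 0 < u + h by rewrite addr_gt0.
  have := @phi_ratio u (u + h) u0; rewrite lerDl (ltW h0) => /(_ isT).
  rewrite ler_pdivlMr// => H.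
  rewrite /Q ler_pdivlMr// lerBrDl; apply: le_trans H; rewrite le_eqVlt; apply/orP; left; apply/eqP.
  field; by rewrite !gt_eqF.
have Qnd : {in Interval (BRight 0) (BInfty R false) &, nondecreasing_fun Q}.
  move=> h1 h2; rewrite !in_itv/= !andbT => h10 h20 h12.
  have t01 : 0 <= h1 / h2 <= 1.
    by apply/andP; split; [rewrite divr_ge0 ?ltW | rewrite ler_pdivrMr// mul1r].
  have := cvx (u + h2) u (h1 / h2) (ltW (addr_gt0 u0 h20)) (ltW u0) t01.
  have -> : h1 / h2 * (u + h2) + (1 - h1 / h2) * u = u + h1.
    field; by rewrite gt_eqF.
  move=> H; rewrite /Q ler_pdivrMr//.
  have -> : (phi (u + h2) - phi u) / h2 * h1 = h1 / h2 * phi (u + h2) + (1 - h1 / h2) * phi u - phi u.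
    field; by rewrite gt_eqF.
  by rewrite lerD2r.
have lb : has_lbound (Q @` [set` Interval (BRight 0) (BInfty R false)]).
  by exists (phi u / u) => _ [h hin <-]; move: hin; rewrite /= in_itv/= andbT => h0; exact: Qlb.
have H := @nondecreasing_at_right_cvgr R Q 0 (BInfty R false) isT Qnd lb.
rewrite /rderiv (_ : (fun h => (phi (u + h) - phi u) / h) = Q)//.
rewrite (cvg_lim _ H)//; apply: lb_le_inf.
  by exists (Q 1), 1 => //=; rewrite in_itv/= andbT.
by move=> _ [h hin <-]; move: hin; rewrite /= in_itv/= andbT => h0; exact: Qlb.
Qed.

Lemma phi_large M : exists U, 0 < U /\ forall u, U <= u -> M < phi u / u.
Proof.
case: Hphi => [_ _ /cvgryPgt /(_ M) [N [Nr HN]]].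
exists (Num.max N 0 + 1); split; first by rewrite ltr_wpDl// le_max lexx orbT.
move=> u Uu; apply: HN; apply: lt_le_trans Uu.
by rewrite ltr_pwDr// le_max lexx.
Qed.

Lemma phistar_ge v : 0 <= v -> v - phi 1 <= phistar phi v /\ 0 <= phistar phi v.
Proof.
move=> v0; have Hp := Hphi; case: Hp => [[cvx p0 pp] l0 loo].
rewrite /phistar; set S := [set _ | _ in _].
have ubS : has_ubound S.
  have := loo; move/cvgryPgt => /(_ v) [M [Mr HM]].
  exists (Num.max M 0 * v) => _ [u /= u0 <-].
  have [uM|Mu] := leP u (Num.max M 0).
    have := @phi_ge0 u (ltW u0); have := ler_wpM2r v0 uM; lra.
  have : M < u by apply: le_lt_trans Mu; rewrite le_max lexx.
  move=> /HM; rewrite ltr_pdivlMr// => h.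
  have : 0 <= Num.max M 0 * v by rewrite mulr_ge0// le_max lexx orbT.
  have : v * u = u * v by rewrite mulrC.
  lra.
have supub := ub_le_sup ubS.
split.
  by apply: supub; exists 1 => //=; rewrite mul1r.
rewrite leNgt; apply/negP => sneg.
have : \forall t \near 0^'+, [/\ phi t / t < 1, 0 < t & t < - sup S].
  near=> t; split; near: t.
  - exact: (cvgr_lt 0 l0 1 ltr01).
  - exact: nbhs_right_gt.
  - by apply: nbhs_right_lt; rewrite oppr_gt0.
move=> Hn; have [|u [h1 u0 us]] := filter_ex Hn; first exact: at_right_proper_filter.
have : u * v - phi u <= sup S by apply: supub; exists u.
move: h1; rewrite ltr_pdivrMr// mul1r => h1.
have := mulr_ge0 (ltW u0) v0; lra.
Unshelve. all: by end_near.
Qed.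
End Phi.
Section M.
Variable R : realType.
Local Notation mu := (@lebesgue_measure R).
Local Open Scope ereal_scope.

Lemma le_int_nm (D : set R) (f1 f2 : R -> \bar R) :
  (forall x, D x -> 0 <= f1 x) -> (forall x, D x -> f1 x <= f2 x) ->
  \int[mu]_(x in D) f1 x <= \int[mu]_(x in D) f2 x.
Proof.
move=> f10 f12.
have f20 : forall x, D x -> 0 <= f2 x by move=> x Dx; exact: le_trans (f10 _ Dx) (f12 _ Dx).
rewrite !ge0_integralE//; apply: ereal_sup_le => _ [h /= hf <-]; exists h => //= x.
apply: le_trans (hf x) _; rewrite /patch; case: ifP => // /[!inE] Dx; exact: f12.
Qed.

Lemma le_mu (A B : set R) : A `<=` B -> mu A <= mu B.
Proof. move=> AB; exact: (le_mu_ext (wlength (@idfun R)) AB). Qed.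

Lemma drearr_ge0 (gam : \bar R) h t : 0 <= drearr gam h t.
Proof. by apply: le_ereal_inf_tmp => _ [s [s0 _] <-]; rewrite lee_fin. Qed.

Lemma drearr_lb (gam : \bar R) h (A t : R) :
  (forall s, (0 <= s)%R -> (s < A)%R -> t%:E < distrib gam h s) ->
  A%:E <= drearr gam h t.
Proof.
move=> H; apply: le_ereal_inf_tmp => _ [s [s0 ds] <-]; rewrite lee_fin.
rewrite leNgt; apply/negP => sA; have := H s s0 sA; rewrite ltNge ds.
by [].
Qed.

Lemma distrib_lb (gam : \bar R) h (S : set R) (A s : R) : S `<=` Iset gam ->
  (forall x, S x -> A%:E <= h x) -> (s < A)%R -> mu S <= distrib gam h s.
Proof.
move=> SI Sh sA; apply: le_mu => x Sx; split; first exact: SI.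
apply: (@lt_le_trans _ _ A%:E); first by rewrite lte_fin.
exact: le_trans (Sh _ Sx) (lee_abs _).
Qed.

Lemma Iset0 (gam : \bar R) : 0 < gam -> Iset gam 0%R.
Proof. by move=> g0; split. Qed.

Lemma pos_below (y : \bar R) : 0 < y -> exists m, (0 < m)%R /\ m%:E < y.
Proof.
case: y => [r||] //=.
  rewrite lte_fin => r0; exists (r / 2)%R; split; first by rewrite divr_gt0.
  by rewrite lte_fin; lra.
by move=> _; exists 1%R; split => //; exact: ltry.
Qed.

Lemma mu_oc (a x : R) : (a < x)%R -> mu `]a, x] = (x - a)%:E.
Proof. by move=> ax; rewrite lebesgue_measure_itv/= lte_fin ax -EFinD. Qed.

Lemma ratio_lb (gam : \bar R) w g (a x eps : R) : is_weight gam w ->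
  (0 <= a)%R -> (a < x)%R -> x%:E < gam -> (0 < eps)%R ->
  (forall t, (a < t <= x)%R -> eps%:E <= g t) -> (eps / w 0)%:E <= Defs.ratio w g a x.
Proof.
case => wpos wdec _ _ a0 ax xg e0 gb.
have Ix t : (a < t <= x)%R -> Iset gam t.
  move=> /andP[aT tx]; split; first by rewrite (le_trans a0)// ltW.
  by apply: le_lt_trans xg; rewrite lee_fin.
have I0 : Iset gam 0%R.
  by split => //; apply: le_lt_trans xg; rewrite lee_fin (le_trans a0)// ltW.
have Ixx : Iset gam x by apply: Ix; rewrite ax lexx.
have w0 : (0 < w 0)%R by exact: wpos.
have wx : (0 < w x)%R by exact: wpos.
have mI : measurable (`]a, x] : set R) by exact: measurable_itv.
have xa : (0 < x - a)%R by rewrite subr_gt0.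
have Gb : (eps * (x - a))%:E <= Gint g a x.
  have := @le_int_nm `]a, x] (cst eps%:E) g _ _.
  rewrite integral_cst// [X in _ * X <= _](_ : _ = (x - a)%:E); last exact: mu_oc.
  rewrite -EFinM; apply.
    by move=> y _; rewrite lee_fin ltW.
  by move=> y; rewrite /= in_itv/= => /gb.
set W := (\int[mu]_(y in `]a, x]) (w y)%:E).
have Wub : W <= (w 0 * (x - a))%:E.
  have := @le_int_nm `]a, x] (fun y => (w y)%:E) (cst (w 0)%:E) _ _.
  rewrite integral_cst// [X in _ <= _ * X](_ : _ = (x - a)%:E); last exact: mu_oc.
  rewrite -EFinM; apply.
    by move=> y; rewrite /= in_itv/= => /Ix /wpos/ltW; rewrite lee_fin.
  move=> y; rewrite /= in_itv/= => /[dup] /Ix Iy /andP[ay yx]; rewrite lee_fin.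
  by apply: wdec => //; rewrite (le_trans a0)// ltW.
have Wlb : (w x * (x - a))%:E <= W.
  have := @le_int_nm `]a, x] (cst (w x)%:E) (fun y => (w y)%:E) _ _.
  rewrite integral_cst// [X in _ * X <= _](_ : _ = (x - a)%:E); last exact: mu_oc.
  rewrite -EFinM; apply.
    by move=> y _; rewrite lee_fin ltW.
  move=> y; rewrite /= in_itv/= => /[dup] /Ix Iy /andP[ay yx]; rewrite lee_fin.
  exact: wdec.
have Wfin : W \is a fin_num.
  by rewrite fin_numElt (lt_le_trans _ Wlb) ?ltNyr// (le_lt_trans Wub) ?ltry.
rewrite /ratio /Wint -/W; set Wr := fine W.
have WrE : W = Wr%:E by rewrite fineK.
have Wr0 : (0 < Wr)%R.
  rewrite -lte_fin -WrE; apply: lt_le_trans Wlb; rewrite lte_fin mulr_gt0//.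
apply: (@le_trans _ _ ((eps * (x - a))%:E * (Wr^-1)%:E)); last first.
  by apply: lee_wpmul2r => //; rewrite lee_fin invr_ge0 ltW.
rewrite -EFinM lee_fin ler_pdivrMr// mulrAC ler_pdivlMr ?invr_gt0//.
have : (Wr <= w 0 * (x - a))%R by rewrite -lee_fin -WrE.
move=> h; rewrite -mulrA ler_wpM2l ?(ltW e0)// mulrC.
by [].
Qed.

Lemma level_lb (gam : \bar R) w g (x m eps : R) : is_weight gam w -> 0 < gam ->
  (0 <= x)%R -> (x < m)%R -> m%:E < gam -> (0 < eps)%R ->
  (forall t, (0 <= t)%R -> (t < m)%R -> eps%:E <= g t) ->
  (eps / w 0)%:E <= level_fun gam w g x * ((w x)^-1)%:E.
Proof.
move=> Hw g0 x0 xm mg e0 gb; have Hw' := Hw; case: Hw' => wpos wdec _ _.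
have xg : x%:E < gam by apply: lt_trans mg; rewrite lte_fin.
have Ix : Iset gam x by split.
have I0 : Iset gam 0%R by split.
have wx : (0 < w x)%R by exact: wpos.
have w0 : (0 < w 0)%R by exact: wpos.
rewrite /level_fun; case: pselect => [H|_].
  have [[lev _] /andP[ax xb]] := projT2 (cid H).
  case: lev => a0 ab bg levt.
  have := levt x; rewrite ax xb => /(_ isT) hr.
  rewrite -muleA -EFinM mulfV ?gt_eqF// mule1; apply: le_trans hr.
  apply: (@ratio_lb gam w g _ x eps Hw a0 ax xg e0) => t /andP[aT tx].
  apply: gb; first by rewrite (le_trans a0)// ltW.
  exact: le_lt_trans xm.
rewrite EFinM; apply: lee_pmul.
- by rewrite lee_fin ltW.
- by rewrite lee_fin invr_ge0 ltW.
- exact: gb.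
by rewrite lee_fin lef_pV2 ?posrE//; apply: wdec.
Qed.

Lemma mu_co (m : R) : (0 < m)%R -> mu `[0%R, m[%classic = m%:E.
Proof. by move=> m0; rewrite lebesgue_measure_itv/= lte_fin m0 sube0. Qed.

Lemma rho_lb (gam : \bar R) w phi h (m A : R) : is_weight gam w -> is_Nfunction phi ->
  (0 < m)%R -> m%:E < gam -> (phi 1 <= A)%R ->
  (forall t, (0 <= t)%R -> (t < m)%R -> A%:E <= drearr gam h t) ->
  ((A - phi 1) * (w m * m))%:E <= rhoOL (phistar phi) gam w h.
Proof.
move=> [wpos wdec _ _] Hp m0 mg Ap hb.
set c := ((A - phi 1) * w m)%R.
have Im : Iset gam m by split => //; exact: ltW.
have wm : (0 < w m)%R by exact: wpos.
have c0 : (0 <= c)%R by rewrite mulr_ge0 ?subr_ge0// ltW.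
pose S : set R := `[0%R, m[%classic.
have mS : measurable S by exact: measurable_itv.
have SI : S `<=` Iset gam.
  move=> x; rewrite /S /= in_itv/= => /andP[x0 xm]; split => //.
  by apply: lt_trans mg; rewrite lte_fin.
have F0 x : Iset gam x -> 0 <= extE (phistar phi) (drearr gam h x) * (w x)%:E.
  move=> Ix; have wx := wpos _ Ix.
  have := drearr_ge0 gam h x; case: (drearr gam h x) => [r||]//.
    rewrite lee_fin => r0; rewrite /= -EFinM lee_fin mulr_ge0//; last exact: ltW.
    by case: (@phistar_ge R phi Hp r r0).
  by move=> _ /=; rewrite gt0_mulye// lte_fin.
rewrite /rhoOL; apply: (@le_trans _ _ (\int[mu]_(x in Iset gam) ((cst c%:E) \_ S) x)).
  rewrite -integral_mkcondr setIidr// integral_cst// [X in _ * X](_ : _ = m%:E); last exact: mu_co.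
  by rewrite -EFinM mulrA.
apply: le_int_nm.
  by move=> x _; rewrite /patch; case: ifP => // _; rewrite lee_fin.
move=> x Ix; rewrite /patch; case: ifP => [/[!inE] Sx|_]; last exact: F0.
have wx := wpos _ Ix.
move: Sx; rewrite /S /= in_itv/= => /andP[x0 xm].
have := hb x x0 xm; case: (drearr gam h x) => [r||]//.
  rewrite lee_fin => Ar /=; rewrite -EFinM lee_fin /c.
  have r0 : (0 <= r)%R by apply: le_trans Ar; apply: le_trans Ap; exact: phi_ge0.
  case: (@phistar_ge R phi Hp r r0) => h1 _.
  apply: ler_pM.
  - by rewrite subr_ge0.
  - exact: ltW wm.
  - lra.
  - by apply: wdec => //; exact: ltW.
by move=> _ /=; rewrite gt0_mulye ?lte_fin// leey.
Qed.

Lemma Iset_meas (gam : \bar R) : measurable (Iset gam).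
Proof.
case: gam => [r||].
- rewrite (_ : Iset r%:E = `[0%R, r[%classic); first exact: measurable_itv.
  apply/seteqP; split => x /=.
    by case => x0 xr; rewrite in_itv/= x0 /= -lte_fin.
  by rewrite in_itv/= => /andP[x0 xr]; split => //; rewrite lte_fin.
- rewrite (_ : Iset +oo = `[0%R, +oo[%classic); first exact: measurable_itv.
  apply/seteqP; split => x /=.
    by case => x0 _; rewrite in_itv/= x0.
  by rewrite in_itv/= andbT => x0; split => //; exact: ltry.
- rewrite (_ : Iset -oo = set0); first exact: measurable0.
  by apply/seteqP; split => x //= [_]; rewrite ltNge leNye.
Qed.

Lemma exists_eps (gam : \bar R) (f : R -> R) : measurable_fun (Iset gam) f ->
  ~ {ae mu, forall x, Iset gam x -> f x = 0%R} ->
  exists eps, (0 < eps)%R /\ 0 < distrib gam (EFin \o f) eps.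
Proof.
move=> mf; apply: contra_notP => H.
have mI := Iset_meas gam.
pose E (n : nat) := [set x | Iset gam x /\ ((n.+1%:R)^-1)%:E < `|(f x)%:E|].
have mE n : measurable (E n).
  have -> : E n = Iset gam `&` (f @^-1` ((@Num.norm _ R) @^-1` `](n.+1%:R^-1)%R, +oo[%classic)).
    by apply/seteqP; split => x; rewrite /E /= in_itv/= andbT lte_fin.
  apply: mf => //.
  have := @normr_measurable R setT measurableT _ (measurable_itv `](n.+1%:R^-1)%R, +oo[).
  by rewrite setTI.
have E0 n : mu (E n) = 0.
  apply/eqP; rewrite eq_le measure_ge0 andbT leNgt; apply/negP => pos.
  by apply: H; exists (n.+1%:R^-1)%R; split; [rewrite invr_gt0|exact: pos].
have : mu.-negligible (\bigcup_n E n).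
  apply: negligible_bigcup => k; exists (E k); split => //; [exact: (mE k)|exact: (E0 k)].
apply: negligibleS => x /= /not_implyP [Ix fx0].
have fx : (0 < `|f x|)%R by rewrite normr_gt0; apply/eqP.
exists (Num.truncn (`|f x|^-1)) => //; split => //=; rewrite lte_fin.
rewrite -[ltRHS]invrK ltf_pV2 ?posrE ?invr_gt0//; exact: truncnS_gt.
Qed.
End M.

Theorem mainTheorem14 (R : realType) (gam : \bar R) (w phi f : R -> R) :
  (0 < gam)%E ->
  is_weight gam w ->
  is_Nfunction phi ->
  measurable_fun (Iset gam) f ->
  inM phi gam w f ->
  ~ {ae @lebesgue_measure R, forall x, Iset gam x -> f x = 0} ->
  (kbarss phi gam w f < +oo)%E.
Proof.
move=> g0 Hw Hp mf _ nae.
have [eps [e0 de]] := @exists_eps R gam f mf nae.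
have [m1 [m10 m1d]] := @pos_below R _ de.
have [m2 [m20 m2g]] := @pos_below R _ g0.
pose m := Num.min m1 m2.
have m0 : 0 < m by rewrite lt_min m10 m20.
have md : (m%:E < distrib gam (EFin \o f) eps)%E.
  by apply: le_lt_trans m1d; rewrite lee_fin ge_min lexx.
have mg : (m%:E < gam)%E.
  by apply: le_lt_trans m2g; rewrite lee_fin ge_min lexx orbT.
pose g := drearr gam (EFin \o f).
have gb : forall t, 0 <= t -> t < m -> (eps%:E <= g t)%E.
  move=> t t0 tm; apply: drearr_lb => s s0 se.
  apply: (@lt_le_trans _ _ (distrib gam (EFin \o f) eps)).
    by apply: lt_trans md; rewrite lte_fin.
  rewrite /distrib; apply: le_mu => x [Ix ex]; split => //.
  by apply: lt_trans ex; rewrite lte_fin.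
have Hw' := Hw; case: Hw' => wpos wdec _ _.
have I0 : Iset gam 0 := @Iset0 R gam g0.
have Im : Iset gam m by split => //; exact: ltW.
have w0 : 0 < w 0 by exact: wpos.
have wm : 0 < w m by exact: wpos.
pose c := eps / w 0.
have c0 : 0 < c by rewrite divr_gt0.
pose beta := w m * m.
have b0 : 0 < beta by rewrite mulr_gt0.
have [U [U0 HU]] := @phi_large R phi Hp (phi 1 + beta^-1).
apply: (@le_lt_trans _ _ (U / c)%:E); last exact: ltry.
apply: ge_ereal_sup => _ [k [k0 hk] <-]; rewrite lee_fin.
rewrite leNgt; apply/negP => kU.
have kcU : U < k * c by rewrite -ltr_pdivrMr.
have kc0 : 0 < k * c by rewrite mulr_gt0.
pose A := phi (k * c) / (k * c).
have AM : phi 1 + beta^-1 < A := HU _ (ltW kcU).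
pose h := fun x => extE (rderiv phi)
   (k%:E * level_fun gam w g x * ((w x)^-1)%:E)%E.
have hA : forall x, 0 <= x -> x < m -> (A%:E <= h x)%E.
  move=> x x0 xm.
  have lb := @level_lb R gam w g x m eps Hw g0 x0 xm mg e0 gb.
  have : ((k * c)%:E <= k%:E * level_fun gam w g x * ((w x)^-1)%:E)%E.
    by rewrite -muleA EFinM; apply: lee_wpmul2l => //; rewrite lee_fin ltW.
  rewrite /h; case: (k%:E * level_fun gam w g x * ((w x)^-1)%:E)%E => [r||] //=.
    rewrite !lee_fin => kcr.
    have r0 : 0 < r by exact: lt_le_trans kcr.
    exact: le_trans (@phi_ratio R phi Hp _ _ kc0 kcr) (@rderiv_ge R phi Hp r r0).
    by move=> _; exact: leey.
have S_I : `[0, m[%classic `<=` Iset gam.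
  move=> x; rewrite /= in_itv/= => /andP[x0 xm]; split => //.
  by apply: lt_trans mg; rewrite lte_fin.
have dist : forall s, 0 <= s -> s < A -> (m%:E <= distrib gam h s)%E.
  move=> s s0 sA.
  have := @distrib_lb R gam h `[0, m[%classic A s S_I _ sA.
  rewrite mu_co//; apply.
  by move=> x; rewrite /= in_itv/= => /andP[x0 xm]; exact: hA.
have hs : forall t, 0 <= t -> t < m -> (A%:E <= drearr gam h t)%E.
  move=> t t0 tm; apply: drearr_lb => s s0 sA.
  by apply: lt_le_trans (dist s s0 sA); rewrite lte_fin.
have Ap : phi 1 <= A.
  by apply: ltW; apply: le_lt_trans AM; rewrite lerDl invr_ge0 ltW.
have := @rho_lb R gam w phi h m A Hw Hp m0 mg Ap hs.
move=> /le_trans /(_ hk); rewrite lee_fin leNgt => /negP; apply.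
have bne : beta != 0 by rewrite gt_eqF.
rewrite -[X in X < _](mulVf bne) ltr_pM2r//; lra.
Qed.
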